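(* Let $G=(V,A)$ be a minimally Eulerian digraph. Then $|A| \le \sqrt{2(|V|-1)}\,|V| + |V| - 1$.
   Context: Digraphs are simple. A connected digraph is Eulerian if every vertex has indegree equal to outdegree (equivalently, it has a closed walk using every arc exactly once). A digraph $G$ is minimally Eulerian if it is a connected Eulerian digraph that contains no proper connected Eulerian spanning subgraph (a subgraph on all vertices of $G$ with a proper subset of the arcs); equivalently, for every directed cycle $C$ of $G$, the digraph $(V, A\setminus A(C))$ is disconnected. *)

(* Defs.v *)
(* A simple digraph on a finite vertex type V is an
   irreflexive relation e : rel V; its arc set is {(u,v) | e u v}.
   (Antiparallel arcs are allowed; loops and parallel arcs are not.) *)
From mathcomp Require Import all_boot all_order all_algebra.
Set Implicit Arguments. Unset Strict Implicit. Unset Printing Implicit Defensive.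

Section Digraphs.
Variable V : finType.

Definition arcs (e : rel V) : {set V * V} := [set p | e p.1 p.2].

Definition connected_arcs (B : {set V * V}) : Prop :=
  0 < #|V| /\
  forall x y : V, connect (fun u v => ((u, v) \in B) || ((v, u) \in B)) x y.

Definition balanced_arcs (B : {set V * V}) : Prop :=
  forall v : V, #|[set p in B | p.1 == v]| = #|[set p in B | p.2 == v]|.

Definition eulerian_arcs (B : {set V * V}) : Prop :=
  connected_arcs B /\ balanced_arcs B.

Definition minimally_eulerian (e : rel V) : Prop :=
  irreflexive e /\ eulerian_arcs (arcs e) /\
  forall B : {set V * V}, B \proper arcs e -> ~ eulerian_arcs B.

End Digraphs.

(* Main.v *)
Require Import Defs.
From mathcomp Require Import all_boot all_order all_algebra.
From mathcomp Require Import zify.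

Set Implicit Arguments. Unset Strict Implicit. Unset Printing Implicit Defensive.


Definition adjA (V : finType) (B : {set V * V}) : rel V :=
  fun u v => ((u, v) \in B) || ((v, u) \in B).

Lemma adjA_sym (V : finType) (B : {set V * V}) : symmetric (adjA B).
Proof. by move=> u v; rewrite /adjA orbC. Qed.

Lemma connect_adjA_sub (V : finType) (B B' : {set V * V}) :
  B \subset B' -> forall x y, connect (adjA B) x y -> connect (adjA B') x y.
Proof.
move=> sBB' x y; apply: connect_sub => u v /orP[] h; apply: connect1;
  by rewrite /adjA (subsetP sBB' _ h) ?orbT.
Qed.

Lemma span_tree (V : finType) (A : {set V * V}) :
  connected_arcs A ->
  exists T : {set V * V}, [/\ T \subset A, #|T| <= #|V|.-1 &
                              forall x y, connect (adjA T) x y].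
Proof.
case=> n0 cA.
have [r _] : exists r : V, true by move/card_gt0P: n0 => [r _]; exists r.
have key : forall k, k < #|V| -> exists (R : {set V}) (T : {set V * V}),
    [/\ r \in R, #|R| = k.+1, T \subset A, #|T| <= k &
        forall v, v \in R -> connect (adjA T) r v].
  elim=> [_|k IH ltk].
    exists [set r], set0; split; rewrite ?set11 ?cards1 ?sub0set ?cards0 //.
    by move=> v; rewrite inE => /eqP ->; apply: connect0.
  have [R [T [rR cR sTA cT hR]]] := IH (ltnW ltk).
  case: (boolP [exists p, (p \in A) && ((p.1 \in R) != (p.2 \in R))]);
    last first.
    move/existsPn => hn.
    have clR : forall y, y \in R.
      move=> y; rewrite -(closed_connect _ (cA r y)) // => u v /orP[] h.
        by have := hn (u, v); rewrite h /= negbK => /eqP.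
      by have := hn (v, u); rewrite h /= negbK => /eqP.
    have : #|R| = #|V| by apply/eqP; rewrite eqn_leq max_card /=;
      apply/subset_leq_card/subsetP => y _; apply: clR.
    by rewrite cR => e; move: ltk; rewrite e ltnn.
  move/existsP => [p /andP [pA pcross]].
  pose x := if p.1 \in R then p.1 else p.2.
  pose w := if p.1 \in R then p.2 else p.1.
  have xR : x \in R by rewrite /x; case: ifP => // /negbT h; move: pcross; rewrite (negbTE h) /= => /negbNE.
  have wR : w \notin R by rewrite /w; case: ifP => // h; move: pcross; rewrite h.
  have pxw : adjA [set p] x w by rewrite /adjA /x /w; case: ifP => _; rewrite !inE;
    [rewrite -surjective_pairing eqxx | rewrite -surjective_pairing eqxx orbT].
  exists (w |: R), (p |: T); split.
  - by rewrite !inE rR orbT.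
  - by rewrite cardsU1 wR cR.
  - by rewrite subUset sub1set pA sTA.
  - by rewrite (leq_trans (leq_card_setU _ _)) // cards1 add1n ltnS.
  move=> v; rewrite !inE => /orP[/eqP ->|vR].
    apply: (connect_trans (connect_adjA_sub (subsetUr [set p] T) (hR x xR))).
    apply: connect1; move: pxw; rewrite /adjA !inE.
    by case/orP=> ->; rewrite ?orbT.
  by apply: (connect_adjA_sub (subsetUr [set p] T) (hR v vR)).
have [R [T [rR cR sTA cT hR]]] := key #|V|.-1 ltac:(by rewrite prednK).
exists T; split => // x y.
have allR : forall v, v \in R.
  have : R == setT.
    by rewrite eqEcard subsetT cardsT cR prednK //= leqnn.
  by move/eqP => -> v; rewrite inE.
apply: (connect_trans (y := r)); last by apply: hR.
by rewrite (sym_connect_sym (@adjA_sym _ T)) hR.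
Qed.


Lemma card_setD_sub (T : finType) (A B : {set T}) (P : pred T) :
  B \subset A ->
  #|[set p in A :\: B | P p]| = #|[set p in A | P p]| - #|[set p in B | P p]|.
Proof.
move=> sBA.
have -> : [set p in A :\: B | P p] = [set p in A | P p] :\: [set p in B | P p].
  by apply/setP => p; rewrite !inE; case: (p \in B); case: (p \in A); case: (P p).
rewrite cardsD (setIidPr _) //; apply/subsetP => p; rewrite !inE => /andP[pB ->].
by rewrite (subsetP sBA _ pB).
Qed.

Lemma hit (V : finType) (A T : {set V * V}) :
  eulerian_arcs A -> (forall B : {set V * V}, B \proper A -> ~ eulerian_arcs B) ->
  T \subset A -> (forall x y, connect (adjA T) x y) ->
  forall B : {set V * V}, B \subset A -> B != set0 -> balanced_arcs B ->
  (forall p, p \in B -> p \notin T) -> False.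
Proof.
move=> [[n0 _] balA] minA sTA cT B sBA B0 balB disj.
apply: (minA (A :\: B)).
  rewrite properE subsetDl /=; apply/negP => /subsetP h.
  have [p pB] := set0Pn _ B0.
  by have := h p (subsetP sBA _ pB); rewrite inE pB.
split; last first.
  by move=> v; rewrite !card_setD_sub // balA balB.
split => // x y; apply: connect_adjA_sub (cT x y).
apply/subsetP => p pT; rewrite inE (subsetP sTA _ pT) andbT.
by apply/negP => pB; have := disj p pB; rewrite pT.
Qed.


Lemma fix_sub (V : finType) (f : V -> V) (P : {set V}) :
  P != set0 -> f @: P \subset P ->
  exists Q : {set V}, [/\ Q != set0, Q \subset P & f @: Q = Q].
Proof.
move: {2}#|P| (leqnn #|P|) => k; elim: k P => [|k IH] P cP P0 fP.
  by move: P0; rewrite -cards_eq0; move: cP; rewrite leqn0 => ->.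
case: (boolP (f @: P == P)) => [/eqP e|ne].
  by exists P; split.
have pr : f @: P \proper P by rewrite properEneq ne fP.
have [|||Q [Q0 sQ eQ]] := IH (f @: P).
- by rewrite -ltnS (leq_trans (proper_card pr)).
- by rewrite imset_eq0.
- by apply: imsetS.
by exists Q; split => //; apply: subset_trans sQ fP.
Qed.

Lemma source (V : finType) (D : {set V * V}) :
  (forall B : {set V * V}, B \subset D -> B != set0 -> balanced_arcs B -> False) ->
  forall U : {set V}, U != set0 ->
  exists2 s, s \in U & forall u, u \in U -> (u, s) \notin D.
Proof.
move=> noB U U0.
case: (boolP [exists s in U, [forall u in U, (u, s) \notin D]]).
  move/exists_inP => [s sU /forall_inP h]; exists s => //.
move/exists_inPn => h.
have hf : forall s, s \in U -> exists2 u, u \in U & (u, s) \in D.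
  move=> s sU; have /forall_inPn [u uU] := h s sU.
  by rewrite negbK => us; exists u.
pose f (s : V) := odflt s [pick u in U | (u, s) \in D].
have fP : forall s, s \in U -> (f s \in U) && ((f s, s) \in D).
  move=> s sU; rewrite /f; case: pickP => [u /andP[-> ->] //|] /=.
  by have [u uU us] := hf s sU => /(_ u); rewrite uU us.
have [Q [Q0 sQU eQ]] : exists Q : {set V}, [/\ Q != set0, Q \subset U & f @: Q = Q].
  apply: fix_sub => //; apply/subsetP => x /imsetP [s sU ->].
  by case/andP: (fP s sU).
have injQ : {in Q &, injective f}.
  by apply/imset_injP; rewrite eQ.
pose B := [set (f z, z) | z in Q].
exfalso; apply: (noB B).
- apply/subsetP => p /imsetP [z zQ ->].
  by case/andP: (fP z (subsetP sQU _ zQ)).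
- by rewrite imset_eq0.
move=> w.
have -> : #|[set p in B | p.2 == w]| = (w \in Q).
  case wQ: (w \in Q).
    rewrite (_ : [set p in B | p.2 == w] = [set (f w, w)]) ?cards1 //.
    apply/setP => p; rewrite !inE; apply/andP/eqP.
      by case=> /imsetP [z zQ ->] /= /eqP ->.
    by move=> ->; split => //; apply/imsetP; exists w.
  apply/eqP; rewrite cards_eq0; apply/eqP/setP => p; rewrite !inE.
  apply/negP => /andP [/imsetP [z zQ ->]] /= /eqP zw.
  by move: wQ; rewrite -zw zQ.
case wQ: (w \in Q).
  have : w \in f @: Q by rewrite eQ.
  move=> /imsetP [z0 z0Q ->].
  rewrite (_ : [set p in B | p.1 == f z0] = [set (f z0, z0)]) ?cards1 //.
  apply/setP => p; rewrite !inE; apply/andP/eqP.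
    case=> /imsetP [z zQ ->] /= /eqP e.
    by rewrite (injQ _ _ zQ z0Q e).
  by move=> ->; split => //; apply/imsetP; exists z0.
apply/eqP; rewrite cards_eq0; apply/eqP/setP => p; rewrite !inE.
apply/negP => /andP [/imsetP [z zQ ->]] /= /eqP zw.
have : f z \in f @: Q by apply/imsetP; exists z.
by rewrite eQ zw wQ.
Qed.


Lemma topo (V : finType) (D : {set V * V}) :
  (forall U : {set V}, U != set0 ->
     exists2 s, s \in U & forall u, u \in U -> (u, s) \notin D) ->
  exists pos : V -> nat, forall u w, (u, w) \in D -> pos u < pos w.
Proof.
move=> src.
have key : forall k (U : {set V}), #|U| = k -> exists pos : V -> nat,
    forall u w, u \in U -> w \in U -> (u, w) \in D -> pos u < pos w.
  elim=> [|k IH] U cU.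
    by exists (fun _ => 0) => u w; move/eqP: cU; rewrite cards_eq0 => /eqP ->; rewrite inE.
  have U0 : U != set0 by rewrite -cards_eq0 cU.
  have [s sU hs] := src U U0.
  have [pos' hpos'] := IH (U :\ s) ltac:(by move: cU; rewrite (cardsD1 s) sU add1n => -[]).
  exists (fun x => if x == s then 0 else (pos' x).+1) => u w uU wU uw.
  case: (eqVneq w s) => [ews|nws].
    by move: (hs u uU); rewrite -ews uw.
  case: (eqVneq u s) => [eus|nus] //.
  by rewrite ltnS; apply: hpos' => //; rewrite !inE ?nus ?nws.
have [pos hpos] := key _ [set: V] (erefl _).
by exists pos => u w; apply: hpos; rewrite inE.
Qed.


Lemma card_fiber (T J : finType) (X : {set T}) (g : T -> J) (S : {pred J}) :
  #|[set p in X | g p \in S]| = \sum_(j in S) #|[set p in X | g p == j]|.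
Proof.
rewrite -sum1dep_card (partition_big g (mem S)) /=; last by move=> i /andP[].
apply: eq_bigr => j jS; rewrite -sum1dep_card; apply: eq_bigl => i.
rewrite -andbA; case: eqP => [-> | _]; first by rewrite jS.
by rewrite !andbF.
Qed.

Lemma card_split (T : finType) (X : {set T}) (P Q : pred T) :
  #|[set p in X | P p]| = #|[set p in X | P p && Q p]| + #|[set p in X | P p && ~~ Q p]|.
Proof.
rewrite -(cardsID [set p | Q p] [set p in X | P p]).
have -> : [set p in X | P p] :&: [set p | Q p] = [set p in X | P p && Q p].
  by apply/setP => p; rewrite !inE andbA.
have -> : [set p in X | P p] :\: [set p | Q p] = [set p in X | P p && ~~ Q p].
  by apply/setP => p; rewrite !inE andbC andbA.
by [].
Qed.

Lemma cut_bal (V : finType) (A : {set V * V}) (S : {set V}) :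
  balanced_arcs A ->
  #|[set p in A | (p.1 \in S) && (p.2 \notin S)]| =
  #|[set p in A | (p.1 \notin S) && (p.2 \in S)]|.
Proof.
move=> bal.
have o : #|[set p in A | p.1 \in S]| = #|[set p in A | p.2 \in S]|.
  by rewrite (card_fiber A (fun p => p.1)) (card_fiber A (fun p => p.2)); apply: eq_bigr.
move: o; rewrite (card_split A (fun p => p.1 \in S) (fun p => p.2 \in S)).
rewrite (card_split A (fun p => p.2 \in S) (fun p => p.1 \in S)) /=.
have -> : [set p in A | (p.2 \in S) && (p.1 \in S)] = [set p in A | (p.1 \in S) && (p.2 \in S)].
  by apply/setP => p; rewrite !inE; case: (p.1 \in S); case: (p.2 \in S); rewrite /= ?andbF ?andbT.
move/addnI => ->; apply: eq_card => p; rewrite !inE.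
by case: (p.1 \in S); case: (p.2 \in S); rewrite /= ?andbF ?andbT.
Qed.


Lemma amgm (a b : nat) : 2 * (a * b) <= a ^ 2 + b ^ 2.
Proof.
have h : (a - b) ^ 2 + 2 * (a * b) = a ^ 2 + b ^ 2 \/ (b - a) ^ 2 + 2 * (a * b) = a ^ 2 + b ^ 2 by nia.
case: h => <-; apply: leq_addl.
Qed.

Lemma cs_nat (I : finType) (a : I -> nat) :
  (\sum_i a i) ^ 2 <= #|I| * \sum_i a i ^ 2.
Proof.
rewrite -(leq_pmul2l (isT : 0 < 2)).
have -> : 2 * (\sum_i a i) ^ 2 = \sum_i \sum_j 2 * (a i * a j).
  rewrite -mulnn big_distrl big_distrr /=; apply: eq_bigr => i _.
  by rewrite big_distrr big_distrr /=.
apply: (@leq_trans (\sum_i \sum_(j : I) (a i ^ 2 + a j ^ 2))).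
  by apply: leq_sum => i _; apply: leq_sum => j _; apply: amgm.
rewrite (eq_bigr (fun i => #|I| * a i ^ 2 + \sum_j a j ^ 2)); last first.
  by move=> i _; rewrite big_split /= sum_nat_const cardT /= -cardE.
rewrite big_split /= -big_distrr /= sum_nat_const cardT -cardE.
by rewrite mul2n -addnn.
Qed.


Lemma count_main (V : finType) (A T : {set V * V}) (pos : V -> nat) :
  balanced_arcs A -> T \subset A ->
  (forall u w, (u, w) \in A :\: T -> pos u < pos w) ->
  #|A :\: T| ^ 2 <= 2 * (#|V| * (#|V| * #|T|)).
Proof.
move=> bal sTA hD.
set D := A :\: T.
pose Z := [set x : (V * V) * V | (x.1 \in D) && (pos x.1.1 < pos x.2 <= pos x.1.2)].
have Za : #|Z| <= #|V| * #|T|.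
  have -> : #|Z| = #|[set x in Z | x.2 \in [set: V]]|.
    by apply: eq_card => x; rewrite !inE andbT.
  rewrite card_fiber -cardsT -sum_nat_const; apply: leq_sum => j _.
  pose S := [set v | pos v < pos j].
  apply: (@leq_trans #|[set p in A | (p.1 \in S) && (p.2 \notin S)]|).
    rewrite -(@card_in_imset _ _ (fun x : (V * V) * V => x.1)); last first.
      move=> x y; rewrite !inE => /andP [_ /eqP xj] /andP [_ /eqP yj] e.
      by rewrite [x]surjective_pairing [y]surjective_pairing e xj yj.
    apply/subset_leq_card/subsetP => p /imsetP [x]; rewrite !inE.
    move=> /andP [/andP [/andP [_ xA] /andP [lt1 le2]] /eqP xj] ->.
    by rewrite xA -xj lt1 /= -leqNgt.
  rewrite cut_bal //; apply/subset_leq_card/subsetP => p; rewrite !inE -leqNgt.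
  move=> /andP [pA /andP [le1 lt2]].
  apply/negPn/negP => pT.
  have : pos p.1 < pos p.2.
    by apply: hD; rewrite -surjective_pairing inE pT pA.
  by rewrite ltnNge (leq_trans (ltnW lt2) le1).
have Zb : \sum_(u : V) #|[set w | (u, w) \in D]| ^ 2 <= 2 * #|Z|.
  have -> : #|Z| = #|[set x in Z | x.1.1 \in [set: V]]|.
    by apply: eq_card => x; rewrite !inE andbT.
  rewrite card_fiber big_distrr /=.
  apply: (@leq_trans (\sum_u 2 * #|[set p in Z | p.1.1 == u]|)); last first.
    by apply: eq_leq; apply: eq_bigl => i; rewrite inE.
  apply: leq_sum => u _.
  set Nu := [set w | (u, w) \in D].
  pose Le := [set q in setX Nu Nu | pos q.2 <= pos q.1].
  pose Ge := [set q in setX Nu Nu | pos q.1 <= pos q.2].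
  have h1 : #|Nu| ^ 2 <= #|Le| + #|Ge|.
    rewrite -mulnn -cardsX; apply: (leq_trans _ (leq_card_setU Le Ge)).
    apply/subset_leq_card/subsetP => q qX; rewrite in_setU /Le /Ge !(in_set, qX) /=.
    by case: (leqP (pos q.2) (pos q.1)) => // /ltnW ->; rewrite orbT.
  have h2 : #|Ge| = #|Le|.
    rewrite -(card_imset Le (f := fun q : V * V => (q.2, q.1))); last first.
      by move=> [a b] [c d] [-> ->].
    apply: eq_card => q; apply/idP/imsetP.
      rewrite !inE => /andP [qX le]; exists (q.2, q.1); last by case: q {qX le}.
      by rewrite !inE /= le andbT; move: qX; rewrite andbC.
    move=> [q' ]; rewrite !inE => /andP [qX le] ->; rewrite /= le andbT.
    by move: qX; rewrite andbC.
  have h3 : #|Le| <= #|[set x in Z | x.1.1 == u]|.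
    rewrite -(card_imset _ (f := fun q : V * V => ((u, q.1), q.2))); last first.
      by move=> [a b] [c d] [-> ->].
    apply/subset_leq_card/subsetP => x /imsetP [q]; rewrite !inE.
    move=> /andP [/andP [q1 q2] le] ->; rewrite /= eqxx andbT q1 le /= andbT.
    by apply: hD; rewrite inE.
  by rewrite mul2n -addnn (leq_trans h1) // h2 leq_add.
have Dc : #|D| = \sum_(u : V) #|[set w | (u, w) \in D]|.
  have -> : #|D| = #|[set p in D | p.1 \in [set: V]]|.
    by apply: eq_card => x; rewrite !inE andbT.
  rewrite card_fiber; apply: eq_big => [u|u _]; first by rewrite inE.
  rewrite -(card_imset _ (f := fun w : V => (u, w))); last by move=> a b [].
  apply: eq_card => p; apply/idP/imsetP.
    rewrite !inE => /andP [/andP [pT pA] /eqP pu]; exists p.2.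
      by rewrite !inE -pu -surjective_pairing pT pA.
    by rewrite -pu -surjective_pairing.
  by move=> [w]; rewrite !inE => wD ->; rewrite /= eqxx andbT.
rewrite Dc (leq_trans (cs_nat _)) // cardT -cardE.
rewrite mulnCA leq_mul2l (leq_trans Zb) ?orbT // leq_mul2l Za orbT //.
Qed.

Lemma arith1 (n t : nat) : t <= n.-1 -> 2 * (n * (n * t)) <= 2 * (n.-1 * n ^ 2).
Proof.
move=> h; rewrite leq_mul2l /= [n.-1 * _]mulnC mulnA -mulnn leq_mul2l h orbT //.
Qed.


Unset Implicit Arguments. Set Strict Implicit.
Import Order.TTheory GRing.Theory Num.Theory.
Local Open Scope ring_scope.

Theorem proposition1p3 (R : rcfType) (V : finType) (e : rel V) :
  minimally_eulerian e ->
  (#|arcs e|%:R : R) <=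
    Num.sqrt (2 * (#|V|%:R - 1)) * #|V|%:R + #|V|%:R - 1.
Proof.
case=> _ [eulA minA].
set A := arcs e.
have [T [sTA cT cconn]] := span_tree eulA.1.
have noB : forall B : {set V * V}, B \subset A :\: T -> B != set0 ->
    balanced_arcs B -> False.
  move=> B sB B0 bB; apply: (hit eulA minA sTA cconn (B:=B)) => //.
    by apply: subset_trans sB (subsetDl _ _).
  by move=> p pB; have := subsetP sB p pB; rewrite inE => /andP[].
have [pos hpos] := topo (source noB).
have cnt := count_main eulA.2 sTA hpos.
have n0 : (0 < #|V|)%N := eulA.1.1.
set n := #|V| in cT cnt n0 *.
set N := #|A :\: T| in cnt *.
have cA : #|A| = (N + #|T|)%N.
  by rewrite /N cardsD (setIidPr sTA) subnK // subset_leq_card.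
have cnt' : (N ^ 2 <= 2 * (n.-1 * n ^ 2))%N.
  by apply: (leq_trans cnt); apply: arith1.
have nR : (n%:R : R) - 1 = (n.-1)%:R.
  by rewrite -{1}(prednK n0) -addn1 natrD addrK.
rewrite cA natrD -addrA nR; apply: lerD; last by rewrite ler_nat.
have -> : (N%:R : R) = Num.sqrt ((N ^ 2)%:R).
  by rewrite natrX sqrtr_sqr ger0_norm.
have -> : Num.sqrt (2 * (n.-1)%:R) * (n%:R : R) =
          Num.sqrt ((2 * (n.-1 * n ^ 2))%:R).
  rewrite natrM natrM natrX mulrA [RHS]sqrtrM; last by rewrite mulr_ge0 ?ler0n.
  by rewrite sqrtr_sqr ger0_norm.
by apply: ler_wsqrtr; rewrite ler_nat.
Qed.
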